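(* Let $\mathcal{S}$ be an inverse semigroupoid. The following are equivalent: (i) $\mathcal{S}$ is $E$-unitary, i.e. $\sigma$ is idempotent pure; (ii) the canonical quotient map $\pi_\sigma:\mathcal{S}\to\mathcal{S}/\sigma$ is idempotent pure, i.e. $\pi_\sigma^{-1}(E(\mathcal{S}/\sigma))\subseteq E(\mathcal{S})$; (iii) if $(s,t)\in\sigma$, then $s^*t\in E(\mathcal{S})$ and $st^*\in E(\mathcal{S})$; (iv) for all $s,t\in\mathcal{S}$, $(s,t)\in\sigma$ if and only if $s^*t\in E(\mathcal{S})$ and $st^*\in E(\mathcal{S})$; (v) if $s\in\mathcal{S}$, $e\in E(\mathcal{S})$ and $e\leqslant s$, then $s\in E(\mathcal{S})$.
   Context: A semigroupoid consists of a set $\mathcal{S}$ of arrows, a set $\mathcal{S}^{(0)}$ of objects, maps $d,c:\mathcal{S}\to\mathcal{S}^{(0)}$, composable pairs $\mathcal{S}^{(2)}=\{(s,t): d(s)=c(t)\}$ and an associative multiplication on $\mathcal{S}^{(2)}$ with $d(st)=d(t)$, $c(st)=c(s)$. It is an inverse semigroupoid if each $s$ has a unique $s^*$ with $(s,s^* ),(s^*,s)\in\mathcal{S}^{(2)}$, $ss^*s=s$, $s^*ss^*=s^*$. $E(\mathcal{S})$ is the set of idempotents. Natural partial order: for parallel $s,t$ (same domain and codomain), $s\leqslant t$ iff $s=te$ for some $e\in E(\mathcal{S})$ with $(t,e)\in\mathcal{S}^{(2)}$. $(s,t)\in\sigma$ iff there is $r$ with $r\leqslant s$ and $r\leqslant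 t$; $\sigma$ is a congruence and the quotient $\mathcal{S}/\sigma$ (arrows the $\sigma$-classes, objects $\mathcal{S}^{(0)}$, $d(\pi_\sigma(s))=d(s)$, $c(\pi_\sigma(s))=c(s)$, $\pi_\sigma(s)\pi_\sigma(t)=\pi_\sigma(st)$) is a groupoid. A congruence $R$ is idempotent pure if $(s,e)\in R$ and $e\in E(\mathcal{S})$ imply $s\in E(\mathcal{S})$. $\mathcal{S}$ is called $E$-unitary if $\sigma$ is idempotent pure. *)

(* Defs.v *)
(* The multiplication is given as a total function
   [mul : arr -> arr -> arr], but only its values on composable pairs
   (d s = c t) carry meaning; all axioms are restricted to S^(2). *)
Record semigroupoid := {
  arr : Type;
  obj : Type;
  dom : arr -> obj;
  cod : arr -> obj;
  mul : arr -> arr -> arr;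
  dom_mul : forall s t, dom s = cod t -> dom (mul s t) = dom t;
  cod_mul : forall s t, dom s = cod t -> cod (mul s t) = cod s;
  mul_assoc : forall r s t, dom r = cod s -> dom s = cod t ->
                mul (mul r s) t = mul r (mul s t)
}.

Section Defs.
Variable S : semigroupoid.

Definition composable (s t : arr S) : Prop := dom S s = cod S t.

Definition is_inverse (s s' : arr S) : Prop :=
  composable s s' /\ composable s' s /\
  mul S (mul S s s') s = s /\ mul S (mul S s' s) s' = s'.

Definition idem (e : arr S) : Prop := composable e e /\ mul S e e = e.

Definition nat_le (s t : arr S) : Prop :=
  dom S s = dom S t /\ cod S s = cod S t /\
  exists e, idem e /\ composable t e /\ s = mul S t e.

Definition sigma (s t : arr S) : Prop := exists r, nat_le r s /\ nat_le r t.

Definition idempotent_pure (R : arr S -> arr S -> Prop) : Prop :=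
  forall s e, R s e -> idem e -> idem s.

Definition E_unitary : Prop := idempotent_pure sigma.

(* The quotient S/sigma: arrows are sigma-classes pi_sigma s (as sets),
   d(pi s) = d s, c(pi s) = c s, pi s * pi t = pi (s t).  Hence
   pi_sigma s is an idempotent of S/sigma iff (pi s, pi s) is composable
   (d s = c s) and pi s * pi s = pi s, i.e. pi (s s) = pi s. *)
Definition pi_sigma (s : arr S) : arr S -> Prop := sigma s.

Definition quot_idem_of (s : arr S) : Prop :=
  dom S s = cod S s /\ pi_sigma (mul S s s) = pi_sigma s.

Definition pi_sigma_idempotent_pure : Prop :=
  forall s, quot_idem_of s -> idem s.

End Defs.

Record inverse_semigroupoid := {
  isg :> semigroupoid;
  star : arr isg -> arr isg;
  star_inverse : forall s, is_inverse isg s (star s);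
  star_unique : forall s s', is_inverse isg s s' -> s' = star s
}.

(* Main.v *)
Require Import Defs.

Section Alg.
Variable S : inverse_semigroupoid.
Local Notation m := (mul S).
Local Notation st := (star S).
Local Notation dm := (dom S).
Local Notation cd := (cod S).

Lemma ds s : dm (st s) = cd s.
Proof. destruct (star_inverse S s) as [_ [H _]]. exact H. Qed.
Lemma cs s : cd (st s) = dm s.
Proof. destruct (star_inverse S s) as [H _]. symmetry; exact H. Qed.

Ltac dc := repeat first [ rewrite ds | rewrite cs
  | (rewrite dom_mul; [| solve [dc]]) | (rewrite cod_mul; [| solve [dc]]) ];
  try congruence.

Ltac ra := repeat (rewrite mul_assoc; [| solve [dc] | solve [dc]]).
Ltac ra_in H := repeat (rewrite mul_assoc in H; [| solve [dc] | solve [dc]]).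

Lemma sss s : m s (m (st s) s) = s.
Proof. destruct (star_inverse S s) as [H1 [H2 [H3 H4]]]. unfold composable in *.
  rewrite <- mul_assoc; auto. Qed.
Lemma sss' s : m (st s) (m s (st s)) = st s.
Proof. destruct (star_inverse S s) as [H1 [H2 [H3 H4]]]. unfold composable in *.
  rewrite <- mul_assoc; auto. Qed.

Lemma star_idem e : idem S e -> st e = e.
Proof. intros [H1 H2]. symmetry; apply star_unique. unfold is_inverse, composable.
  rewrite !H2. auto. Qed.

Lemma star_star s : st (st s) = s.
Proof. symmetry; apply star_unique. destruct (star_inverse S s) as [H1 [H2 [H3 H4]]].
  unfold is_inverse in *; tauto. Qed.

Lemma idem_ss s : idem S (m (st s) s).
Proof. split; unfold composable. dc. ra. rewrite sss. reflexivity. Qed.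
Lemma idem_ss' s : idem S (m s (st s)).
Proof. split; unfold composable. dc. ra. rewrite sss'. reflexivity. Qed.


Lemma idem_red e t : idem S e -> dm e = cd t -> m e (m e t) = m e t.
Proof. intros [H1 H2] H. rewrite <- mul_assoc; [|exact H1|exact H]. rewrite H2; auto. Qed.

Lemma idem_mul1 e f : idem S e -> idem S f -> dm e = cd f -> idem S (m e f).
Proof.
  intros He Hf Hef. pose proof He as [He1 He2]. pose proof Hf as [Hf1 Hf2].
  unfold composable in *.
  set (x := m e f). set (y := st x).
  assert (Hdy : dm y = cd e) by (unfold y, x; dc).
  assert (Hcy : cd y = dm f) by (unfold y, x; dc).
  assert (Hz : is_inverse S x (m f (m y e))).
  { unfold is_inverse, composable, x. repeat split; try (dc; fail).
    - ra. rewrite (idem_red f); [|exact Hf|dc]. rewrite (idem_red e); [|exact He|dc].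
      pose proof (sss x) as H. fold y in H. unfold x in H. ra_in H. exact H.
    - ra. rewrite (idem_red e); [|exact He|dc]. rewrite (idem_red f); [|exact Hf|dc].
      pose proof (sss' x) as H. fold y in H. unfold x in H.
      apply (f_equal (fun a => m a e)) in H. ra_in H. rewrite H. reflexivity. }
  apply star_unique in Hz. fold y in Hz.
  assert (Hyi : idem S y).
  { split. unfold composable; congruence.
    pose proof (sss' x) as H. fold y in H. unfold x in H.
    apply (f_equal (fun a => m a e)) in H. ra_in H.
    rewrite <- Hz. ra. rewrite H. reflexivity. }
  pose proof (star_idem _ Hyi) as H. unfold y in H at 1. rewrite star_star in H.
  rewrite H. exact Hyi.
Qed.

Lemma idem_comm e f : idem S e -> idem S f -> dm e = cd f -> m e f = m f e.
Proof.
  intros He Hf Hef. pose proof He as [He1 He2]. pose proof Hf as [Hf1 Hf2].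
  unfold composable in *.
  pose proof (idem_mul1 e f He Hf Hef) as Hxi.
  assert (Hfe : idem S (m f e)) by (apply idem_mul1; auto; congruence).
  rewrite <- (star_idem _ Hfe). apply star_unique.
  destruct Hxi as [_ Hx]. destruct Hfe as [_ Hy'].
  unfold is_inverse, composable. repeat split; try (dc; fail).
  - ra. rewrite (idem_red e); [|exact He|dc]. rewrite (idem_red f); [|exact Hf|dc].
    ra_in Hy'. exact Hy'.
  - ra. rewrite (idem_red f); [|exact Hf|dc]. rewrite (idem_red e); [|exact He|dc].
    ra_in Hx. exact Hx.
Qed.


Ltac tl HH uu := apply (f_equal (fun a => m a uu)) in HH; ra_in HH.

Lemma sss_t s u : cd u = dm s -> m s (m (st s) (m s u)) = m s u.
Proof. intro Hu. pose proof (sss s) as H. tl H u. exact H. Qed.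
Lemma sss'_t s u : cd u = cd s -> m (st s) (m s (m (st s) u)) = m (st s) u.
Proof. intro Hu. pose proof (sss' s) as H. tl H u. exact H. Qed.

Lemma star_mul s t : dm s = cd t -> st (m s t) = m (st t) (st s).
Proof.
  intro Hst. symmetry; apply star_unique. unfold is_inverse, composable.
  repeat split; try (dc; fail).
  - ra. assert (H : m (m t (st t)) (m (st s) s) = m (m (st s) s) (m t (st t))).
    { apply idem_comm; [apply idem_ss'|apply idem_ss|dc]. }
    ra_in H. tl H t. rewrite H. rewrite sss, sss_t; dc.
  - ra. assert (H : m (m t (st t)) (m (st s) s) = m (m (st s) s) (m t (st t))).
    { apply idem_comm; [apply idem_ss'|apply idem_ss|dc]. }
    ra_in H. apply (f_equal (fun a => m (st t) a)) in H. ra_in H. tl H (st s).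
    rewrite <- H. rewrite sss'_t by dc. rewrite sss'. reflexivity.
Qed.

Lemma L e s : idem S e -> dm e = cd s ->
  m e s = m s (m (st s) (m e s)) /\ idem S (m (st s) (m e s)).
Proof.
  intros He Hes. pose proof He as [He1 He2]. unfold composable in He1.
  assert (H : m e (m s (st s)) = m (m s (st s)) e).
  { apply idem_comm; [exact He|apply idem_ss'|dc]. }
  split.
  - ra_in H. tl H s. rewrite sss in H. rewrite <- H. reflexivity.
  - split. unfold composable; dc. ra.
    ra_in H. tl H (m e s). rewrite H. rewrite (idem_red e); [|exact He|dc]. rewrite sss'_t; dc.
Qed.

Lemma le_e e s : idem S e -> nat_le S e s -> m s e = e /\ m (m (st s) s) e = e.
Proof.
  intros He [Hd [Hc [f [Hf [Hsf Hes]]]]]. pose proof He as [He1 He2].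
  pose proof Hf as [Hf1 Hf2]. unfold composable in *.
  assert (E1 : e = m (m (st s) s) f).
  { assert (E0 : e = m f (st s)).
    { transitivity (st e). symmetry; apply star_idem; auto.
      rewrite Hes. rewrite star_mul by auto.
      rewrite star_idem by auto. reflexivity. }
    transitivity (m (m f (st s)) (m s f)).
    { rewrite <- Hes, <- E0. symmetry; exact He2. }
    assert (H : m f (m (st s) s) = m (m (st s) s) f).
    { apply idem_comm; [exact Hf|apply idem_ss|dc]. }
    ra_in H. tl H f. ra. rewrite H. rewrite Hf2. reflexivity. }
  split.
  - transitivity (m s (m (m (st s) s) f)). f_equal; exact E1.
    ra. rewrite sss_t by dc. congruence.
  - transitivity (m (m (st s) s) (m (m (st s) s) f)). f_equal; exact E1.
    pose proof (idem_ss s) as [_ H]. rewrite <- mul_assoc, H; dc.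
Qed.


Lemma le_refl_idem e : idem S e -> nat_le S e e.
Proof. intros He. pose proof He as [He1 He2]. repeat split; auto.
  exists e. auto. Qed.

Lemma le_trans x y z : nat_le S x y -> nat_le S y z -> nat_le S x z.
Proof.
  intros [Hd1 [Hc1 [e [He [Hye Hx]]]]] [Hd2 [Hc2 [f [Hf [Hzf Hy]]]]].
  pose proof He as [He1 He2]. pose proof Hf as [Hf1 Hf2]. unfold composable in *.
  repeat split; try congruence.
  assert (Hfe : dm f = cd e) by (rewrite Hy in Hye; rewrite dom_mul in Hye; auto).
  exists (m f e). split. apply idem_mul1; auto. split. unfold composable; dc.
  rewrite Hx, Hy. apply mul_assoc; auto.
Qed.

Lemma sigma_sym a b : sigma S a b -> sigma S b a.
Proof. intros [r [H1 H2]]. exists r. auto. Qed.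

Lemma sigma_trans a b c : sigma S a b -> sigma S b c -> sigma S a c.
Proof.
  intros [r1 [H1 H2]] [r2 [H3 H4]].
  destruct H2 as [Hd1 [Hc1 [e1 [He1 [Hb1 Hr1]]]]].
  destruct H3 as [Hd2 [Hc2 [e2 [He2 [Hb2 Hr2]]]]].
  pose proof He1 as [He11 He12]. pose proof He2 as [He21 He22].
  unfold composable in *.
  assert (Hd : dm e1 = cd e2) by congruence.
  pose proof (idem_comm e1 e2 He1 He2 Hd) as Hc.
  exists (m r1 e2). split.
  - apply le_trans with r1; auto. repeat split; try (dc; fail).
    exists e2. repeat split; auto. unfold composable. rewrite Hr1. dc.
  - apply le_trans with r2; auto. repeat split.
    + rewrite Hr1. dc.
    + rewrite Hr1. dc.
    + exists e1. repeat split; auto. unfold composable. rewrite Hr2. dc.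
      rewrite Hr1, Hr2. rewrite !mul_assoc by congruence. rewrite Hc. reflexivity.
Qed.

Lemma le_star r s : nat_le S r s -> nat_le S (st r) (st s).
Proof.
  intros [Hd [Hc [e [He [Hse Hr]]]]]. pose proof He as [He1 He2]. unfold composable in *.
  assert (Hsr : st r = m e (st s)).
  { rewrite Hr, star_mul by auto. rewrite star_idem; auto. }
  destruct (L e (st s) He) as [HL1 HL2]. dc.
  rewrite star_star in HL1, HL2.
  repeat split.
  - rewrite ds, ds. congruence.
  - rewrite cs, cs. congruence.
  - exists (m s (m e (st s))). split; auto. split. unfold composable. dc.
    rewrite Hsr. exact HL1.
Qed.

Lemma compat_sigma s t :
  (composable S (st s) t /\ idem S (m (st s) t)) /\
  (composable S s (st t) /\ idem S (m s (st t))) -> sigma S s t.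
Proof.
  intros [[H1 H2] [H3 H4]]. unfold composable in *.
  pose proof H2 as [H21 _]. unfold composable in H21.
  assert (Hcc : cd s = cd t) by (rewrite ds in H1; auto).
  assert (Hdd : dm s = dm t) by (revert H21; dc).
  assert (Q1 : m (st s) t = m (st t) s).
  { rewrite <- (star_idem _ H2). rewrite star_mul by auto. rewrite star_star. reflexivity. }
  assert (Q2 : m s (st t) = m t (st s)).
  { rewrite <- (star_idem _ H4). rewrite star_mul by auto. rewrite star_star. reflexivity. }
  assert (Q : m s (m (st s) t) = m t (m (st s) s)).
  { rewrite Q1. rewrite <- mul_assoc by dc. rewrite Q2. apply mul_assoc; dc. }
  exists (m s (m (st s) t)). split.
  - split; [|split]; try (dc; fail). exists (m (st s) t). split; [exact H2|split].
    unfold composable; dc. reflexivity.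
  - split; [|split]; try (dc; fail). exists (m (st s) s). split; [apply idem_ss|split].
    unfold composable; dc. exact Q.
Qed.


Section V.
Variable Hv : forall s e : arr S, idem S e -> nat_le S e s -> idem S s.

Lemma P1 s t : sigma S s t -> composable S (st s) t /\ idem S (m (st s) t).
Proof.
  intros [r [[Hd [Hc [e [He [Hse Hr]]]]] [Hd' [Hc' [f [Hf [Htf Hr']]]]]]].
  unfold composable in *. pose proof He as [He1 He2].
  assert (Hct : dm (st s) = cd t) by (rewrite ds; congruence).
  split. exact Hct.
  apply Hv with (m (st s) r).
  - rewrite Hr. rewrite <- mul_assoc by dc. apply idem_mul1; auto. apply idem_ss. dc.
  - split; [|split].
    + rewrite dom_mul, dom_mul by congruence. auto.
    + rewrite cod_mul, cod_mul by congruence. auto.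
    + exists f. split; [exact Hf|split]. unfold composable; dc.
      rewrite Hr'. rewrite <- mul_assoc; congruence.
Qed.

Lemma P2 s t : sigma S s t -> composable S s (st t) /\ idem S (m s (st t)).
Proof.
  intros [r [H1 H2]].
  assert (Hs : sigma S (st s) (st t)) by (exists (st r); split; apply le_star; auto).
  destruct (P1 _ _ Hs) as [A B]. rewrite star_star in A, B. auto.
Qed.
End V.

End Alg.

Ltac dc := repeat first [ rewrite ds | rewrite cs
  | (rewrite dom_mul; [| solve [dc]]) | (rewrite cod_mul; [| solve [dc]]) ];
  try congruence.
Ltac ra := repeat (rewrite mul_assoc; [| solve [dc] | solve [dc]]).
Ltac ra_in H := repeat (rewrite mul_assoc in H; [| solve [dc] | solve [dc]]).

From Stdlib Require Import FunctionalExtensionality PropExtensionality.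

Theorem mainTheorem2 (S : inverse_semigroupoid) :
  let star := star S in
  let E := idem S in
  let m := mul S in
  let i   := E_unitary S in
  let ii  := pi_sigma_idempotent_pure S in
  let iii := forall s t : arr S, sigma S s t ->
               (composable S (star s) t /\ E (m (star s) t)) /\
               (composable S s (star t) /\ E (m s (star t))) in
  let iv  := forall s t : arr S, sigma S s t <->
               ((composable S (star s) t /\ E (m (star s) t)) /\
                (composable S s (star t) /\ E (m s (star t)))) in
  let v   := forall s e : arr S, E e -> nat_le S e s -> E s in
  (i <-> ii) /\ (i <-> iii) /\ (i <-> iv) /\ (i <-> v).
Proof.
  cbv zeta.
  assert (I2V : E_unitary S -> forall s e : arr S, idem S e -> nat_le S e s -> idem S s).
  { intros Hi s e He Hle. apply (Hi s e); auto. exists e. split; auto.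
    apply le_refl_idem; auto. }
  assert (V2I : (forall s e : arr S, idem S e -> nat_le S e s -> idem S s) -> E_unitary S).
  { intros Hv s e [r [Hrs Hre]] He. destruct Hre as [_ [_ [g [Hg [Heg Hr]]]]].
    apply Hv with r; auto. rewrite Hr; apply idem_mul1; auto. }
  assert (III2I : (forall s t : arr S, sigma S s t ->
               (composable S (star S s) t /\ idem S (mul S (star S s) t)) /\
               (composable S s (star S t) /\ idem S (mul S s (star S t)))) -> E_unitary S).
  { intros Hiii. apply V2I. intros s e He Hle.
    pose proof Hle as [Hd [Hc _]]. pose proof He as [He1 He2]. unfold composable in He1.
    destruct (le_e S e s He Hle) as [_ Q].
    assert (Hs : sigma S s (mul S (star S s) s)).
    { exists e. split; auto. split; [|split].
      - dc.
      - dc.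
      - exists e. split; [exact He|split]. unfold composable. dc. auto. }
    destruct (Hiii _ _ Hs) as [_ [_ Hid]].
    rewrite (star_idem S _ (idem_ss S s)) in Hid. rewrite sss in Hid. exact Hid. }
  split; [|split; [|split]].
  - split.
    + intros Hi s [Hds Heq].
      assert (H : pi_sigma S (mul S s s) s).
      { rewrite Heq. exists s.
        assert (Hl : nat_le S s s).
        { split; [|split]; auto. exists (mul S (star S s) s). split. apply idem_ss.
          split. unfold composable; dc. symmetry; apply sss. }
        split; exact Hl. }
      destruct H as [r [[Hd1 [Hc1 [g [Hg [Hsg Hr1]]]]] [Hd2 [Hc2 [h [Hh [Hsh Hr2]]]]]]].
      unfold composable in *.
      pose proof (idem_ss S s) as Hss. pose proof Hss as [Hss1 _]. unfold composable in Hss1.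
      destruct (L S (mul S (star S s) s) s Hss) as [HL1 HL2]. dc.
      apply (I2V Hi s (mul S (star S s) r)).
      * rewrite Hr2. rewrite <- mul_assoc by dc. apply idem_mul1; auto. dc.
      * split; [|split]; try (dc; fail).
        exists (mul S (mul S (star S s) (mul S (mul S (star S s) s) s)) g).
        split. apply idem_mul1; auto. dc. split. unfold composable. dc.
        rewrite Hr1. ra. ra_in HL1. apply (f_equal (fun a => mul S a g)) in HL1.
        ra_in HL1. exact HL1.
    + intros Hii. apply V2I. intros s e He Hle. apply Hii.
      pose proof Hle as [Hd [Hc _]]. pose proof He as [He1 He2]. unfold composable in He1.
      destruct (le_e S e s He Hle) as [Q _].
      assert (Hds : dom S s = cod S s) by congruence.
      split. exact Hds.
      assert (Hs : sigma S (mul S s s) s).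
      { exists e. split; auto. split; [|split].
        - dc.
        - dc.
        - exists e. split; [exact He|split]. unfold composable. dc.
          rewrite mul_assoc by dc. rewrite !Q. reflexivity. }
      unfold pi_sigma. apply functional_extensionality. intro t.
      apply propositional_extensionality. split.
      * intro H. apply sigma_trans with (mul S s s); auto. apply sigma_sym; auto.
      * intro H. apply sigma_trans with s; auto.
  - split.
    + intros Hi s t Hst. split; [apply (P1 S (I2V Hi))|apply (P2 S (I2V Hi))]; exact Hst.
    + exact III2I.
  - split.
    + intros Hi s t. split.
      * intros Hst. split; [apply (P1 S (I2V Hi))|apply (P2 S (I2V Hi))]; exact Hst.
      * apply compat_sigma.
    + intros Hiv. apply III2I. intros s t. apply Hiv.
  - split; auto.
Qed.
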